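(* Let $V$ be a family of subsets of a set $X$ with $\emptyset\in V$. The following are equivalent: (1) $V$ is a prering. (2) Every finite family $\{A_1,\dots,A_k\}\subset V$ has a finite refinement in $V$, i.e. there is a finite family of pairwise disjoint sets $B_1,\dots,B_t\in V$ such that each $A_i$ is the union of some of the $B_j$. (3) For every finite collection of linear spaces $Y_1,\dots,Y_n,W$ and every map $u:Y_1\times\cdots\times Y_n\to W$ with $u(0,\dots,0)=0$, whenever $s_j\in S(V,Y_j)$ for $j=1,\dots,n$, the function $s(x)=u(s_1(x),\dots,s_n(x))$ ($x\in X$) belongs to $S(V,W)$. (4) $S(V)$ is a ring of sets (closed under finite unions and set differences).
   Context: A family $V$ of subsets of $X$ containing $\emptyset$ is a prering if for all $A_1,A_2\in V$ both $A_1\cap A_2$ and $A_1\setminus A_2$ belong to $S(V)$, where $S(V)$ is the family of all sets that are unions of finitely many pairwise disjoint members of $V$. For a linear space $Y$, $S(V,Y)$ denotes the set of functions $X\to Y$ of the form $y_1c_{A_1}+\dots+y_kc_{A_k}$ with $y_i\in Y$, $A_i\in V$ pairwise disjoint ($c_A$ is the characteristic function of $A$). *)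

(* Defs.v *)
From HB Require Import structures.
From mathcomp Require Import all_boot all_order all_algebra.
From Stdlib Require Import ClassicalEpsilon.
Set Implicit Arguments. Unset Strict Implicit. Unset Printing Implicit Defensive.
Import GRing.Theory.
Local Open Scope ring_scope.

Definition pset (X : Type) := X -> Prop.
Definition pset0 {X : Type} : pset X := fun _ => False.
Definition psetI {X : Type} (A B : pset X) : pset X := fun x => A x /\ B x.
Definition psetU {X : Type} (A B : pset X) : pset X := fun x => A x \/ B x.
Definition psetD {X : Type} (A B : pset X) : pset X := fun x => A x /\ ~ B x.

Definition pw_disjoint {X : Type} {k : nat} (B : 'I_k -> pset X) : Prop :=
  forall i j : 'I_k, i != j -> forall x, B i x -> B j x -> False.

Definition inSV {X : Type} (V : pset X -> Prop) (A : pset X) : Prop :=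
  exists (k : nat) (B : 'I_k -> pset X),
    (forall i, V (B i)) /\ pw_disjoint B /\
    (forall x, A x <-> exists i, B i x).

Definition prering {X : Type} (V : pset X -> Prop) : Prop :=
  V pset0 /\
  forall A1 A2, V A1 -> V A2 -> inSV V (psetI A1 A2) /\ inSV V (psetD A1 A2).

Definition charf {X : Type} {R : pzRingType} {Y : lmodType R}
  (A : pset X) (y : Y) : X -> Y :=
  fun x => if excluded_middle_informative (A x) then y else 0.

Definition inSVY {X : Type} {R : pzRingType} (V : pset X -> Prop)
  (Y : lmodType R) (f : X -> Y) : Prop :=
  exists (k : nat) (y : 'I_k -> Y) (A : 'I_k -> pset X),
    (forall i, V (A i)) /\ pw_disjoint A /\
    (forall x, f x = \sum_(i < k) charf (A i) (y i) x).

Definition finite_refinement {X : Type} (V : pset X -> Prop) : Prop :=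
  forall (k : nat) (A : 'I_k -> pset X), (forall i, V (A i)) ->
    exists (t : nat) (B : 'I_t -> pset X),
      (forall j, V (B j)) /\ pw_disjoint B /\
      forall i, exists J : 'I_t -> bool,
        forall x, A i x <-> exists j, J j /\ B j x.

Definition superposition_closed {X : Type} (K : fieldType) (V : pset X -> Prop) : Prop :=
  forall (n : nat) (Y : 'I_n -> lmodType K) (W : lmodType K)
         (u : (forall j : 'I_n, Y j) -> W),
    u (fun j => 0) = 0 ->
    forall s : forall j : 'I_n, X -> Y j,
      (forall j, inSVY V (s j)) ->
      inSVY V (fun x => u (fun j => s j x)).

Definition SV_ring {X : Type} (V : pset X -> Prop) : Prop :=
  inSV V pset0 /\
  forall A B, inSV V A -> inSV V B -> inSV V (psetU A B) /\ inSV V (psetD A B).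

(* Main.v *)
Require Import Defs.
From HB Require Import structures.
From mathcomp Require Import all_boot all_order all_algebra.
From Stdlib Require Import Classical ClassicalEpsilon FunctionalExtensionality.
Set Implicit Arguments. Unset Strict Implicit. Unset Printing Implicit Defensive.

Section Fam.
Context {X : Type} (V : pset X -> Prop).

Definition fam k (B : 'I_k -> pset X) := (forall i, V (B i)) /\ pw_disjoint B.
Definition UU k (B : 'I_k -> pset X) x := exists i, B i x.
Definition sub (A C : pset X) := forall x, A x -> C x.
Definition unionof k (B : 'I_k -> pset X) (A : pset X) :=
  forall x, A x -> exists i, sub (B i) A /\ B i x.

Definition catf k1 k2 (B1 : 'I_k1 -> pset X) (B2 : 'I_k2 -> pset X)
  : 'I_(k1 + k2) -> pset X :=
  fun i => match split i with inl a => B1 a | inr b => B2 b end.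

Lemma catf_l k1 k2 B1 B2 a : @catf k1 k2 B1 B2 (lshift k2 a) = B1 a.
Proof. by rewrite /catf (unsplitK (inl a)). Qed.
Lemma catf_r k1 k2 B1 B2 b : @catf k1 k2 B1 B2 (rshift k1 b) = B2 b.
Proof. by rewrite /catf (unsplitK (inr b)). Qed.

Lemma catf_cases k1 k2 B1 B2 j :
  (exists a, @catf k1 k2 B1 B2 j = B1 a) \/ (exists b, @catf k1 k2 B1 B2 j = B2 b).
Proof. rewrite /catf; case: (split j) => [a|b]; [left|right]; by exists a + exists b. Qed.

Lemma fam_cat k1 k2 B1 B2 : fam B1 -> fam B2 ->
  (forall a b x, B1 a x -> B2 b x -> False) -> fam (@catf k1 k2 B1 B2).
Proof.
move=> [V1 D1] [V2 D2] D12; split.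
  by move=> i; rewrite /catf; case: (split i).
move=> i j; rewrite -(splitK i) -(splitK j) /catf !unsplitK.
case: (split i) => [a|b]; case: (split j) => [a'|b'] /= ne x.
- apply: D1; apply: contra ne => /eqP -> //.
- exact: D12.
- by move=> h1 h2; exact: (D12 _ _ _ h2 h1).
- apply: D2; apply: contra ne => /eqP -> //.
Qed.

Lemma UU_cat k1 k2 B1 B2 x : UU (@catf k1 k2 B1 B2) x <-> UU B1 x \/ UU B2 x.
Proof.
split.
  by move=> [i]; case: (catf_cases B1 B2 i) => [[a ->]|[b ->]] h; [left|right]; exists a + exists b.
by case=> [[a h]|[b h]]; [exists (lshift k2 a); rewrite catf_l | exists (rshift k1 b); rewrite catf_r].
Qed.

Lemma unionof_l k1 k2 B1 B2 A : unionof B1 A -> unionof (@catf k1 k2 B1 B2) A.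
Proof. move=> h x /h [i [s hi]]; exists (lshift k2 i); by rewrite catf_l. Qed.
Lemma unionof_r k1 k2 B1 B2 A : unionof B2 A -> unionof (@catf k1 k2 B1 B2) A.
Proof. move=> h x /h [i [s hi]]; exists (rshift k1 i); by rewrite catf_r. Qed.

Lemma unionof_trans k1 k2 (B : 'I_k1 -> pset X) (C : 'I_k2 -> pset X) A :
  unionof B A -> (forall i, unionof C (B i)) -> unionof C A.
Proof.
move=> hA hB x /hA [i [s hi]]; have [j [s' hj]] := hB i x hi.
by exists j; split=> // y /s' /s.
Qed.

Lemma fam0 : fam (fun i : 'I_0 => pset0).
Proof. by split; case. Qed.
Lemma fam1 A : V A -> fam (fun i : 'I_1 => A).
Proof. by move=> h; split=> // i j; rewrite (ord1 i) (ord1 j) eqxx. Qed.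

Lemma inSV_ext A A' : (forall x, A x <-> A' x) -> inSV V A -> inSV V A'.
Proof.
move=> e [k [B [h1 [h2 h3]]]]; exists k, B; do 2!split=> //.
by move=> x; rewrite -e.
Qed.

Lemma inSV_V A : V A -> inSV V A.
Proof.
move=> h; exists 1, (fun _ => A); have [? ?] := fam1 h; do 2!split=> //.
by move=> x; split=> [a|[]//]; exists ord0.
Qed.

End Fam.


Section Pre.
Context {X : Type} (V : pset X -> Prop) (HP : prering V).

Lemma fam_piecewise k (B : 'I_k -> pset X) (F : pset X -> pset X) :
  fam V B -> (forall C, V C -> inSV V (F C)) -> (forall C x, F C x -> C x) ->
  exists k' (B' : 'I_k' -> pset X), fam V B' /\
     forall x, UU B' x <-> exists i, F (B i) x.
Proof.
move=> [VB DB] HF HFs.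
suff: forall m, (m <= k)%N -> exists k' (B' : 'I_k' -> pset X), fam V B' /\
     forall x, UU B' x <-> exists i : 'I_k, (i < m)%N /\ F (B i) x.
  move=> /(_ k (leqnn k)) [k' [B' [f e]]]; exists k', B'; split=> // x.
  rewrite e; split=> [[i [_ h]]|[i h]]; by exists i.
elim=> [|m IH] Hm.
  exists 0, (fun _ => pset0); split; first exact: fam0.
  by move=> x; split=> [[[]]|[i []]].
have [k1 [B1 [f1 e1]]] := IH (ltnW Hm).
pose im := Ordinal Hm.
have [k2 [B2 [V2 [D2 e2]]]] := HF _ (VB im).
exists (k1 + k2), (catf B1 B2); split.
  apply: fam_cat=> // a b x h1 h2.
  have [i [lti hi]] : exists i : 'I_k, (i < m)%N /\ F (B i) x by apply/e1; exists a.
  have hm : F (B im) x by apply/e2; exists b.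
  apply: (DB i im _ x (HFs _ _ hi) (HFs _ _ hm)).
  by rewrite -val_eqE /= neq_ltn lti.
move=> x; rewrite UU_cat e1; split.
  case=> [[i [lti hi]]|h]; first by exists i; split=> //; rewrite ltnS ltnW.
  by exists im; split=> //; apply/e2.
move=> [i [lti hi]]; rewrite ltnS leq_eqVlt in lti; case/orP: lti => [/eqP ei|lti].
  right; apply/e2; have ei' : i = im by apply: val_inj.
  by rewrite -ei'.
by left; exists i.
Qed.

Lemma famI k (B : 'I_k -> pset X) A : fam V B -> V A ->
  exists k' (B' : 'I_k' -> pset X), fam V B' /\ forall x, UU B' x <-> UU B x /\ A x.
Proof.
move=> f VA; have [k' [B' [f' e]]] := fam_piecewise (F := fun C => psetI C A) f
  (fun C VC => proj1 (proj2 HP C A VC VA)) (fun C x h => proj1 h).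
exists k', B'; split=> // x; rewrite e; split=> [[i [h1 h2]]|[[i h1] h2]]; last by exists i.
by split=> //; exists i.
Qed.

Lemma famD k (B : 'I_k -> pset X) A : fam V B -> V A ->
  exists k' (B' : 'I_k' -> pset X), fam V B' /\ forall x, UU B' x <-> UU B x /\ ~ A x.
Proof.
move=> f VA; have [k' [B' [f' e]]] := fam_piecewise (F := fun C => psetD C A) f
  (fun C VC => proj2 (proj2 HP C A VC VA)) (fun C x h => proj1 h).
exists k', B'; split=> // x; rewrite e; split=> [[i [h1 h2]]|[[i h1] h2]]; last by exists i.
by split=> //; exists i.
Qed.

Lemma diffU k (B : 'I_k -> pset X) A : fam V B -> V A ->
  exists k' (B' : 'I_k' -> pset X), fam V B' /\ forall x, UU B' x <-> A x /\ ~ UU B x.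
Proof.
move=> [VB DB] VA.
suff: forall m, (m <= k)%N -> exists k' (B' : 'I_k' -> pset X), fam V B' /\
     forall x, UU B' x <-> A x /\ ~ exists i : 'I_k, (i < m)%N /\ B i x.
  move=> /(_ k (leqnn k)) [k' [B' [f e]]]; exists k', B'; split=> // x.
  rewrite e; split=> [[h1 h2]|[h1 h2]]; split=> // [[i hi]]; apply: h2.
    by exists i.
  by exists i; case: hi.
elim=> [|m IH] Hm.
  exists 1, (fun _ => A); split; first exact: fam1.
  move=> x; split=> [[_ h]|[h _]]; last by exists ord0.
  by split=> // [[i []]].
have [k1 [B1 [f1 e1]]] := IH (ltnW Hm).
pose im := Ordinal Hm.
have [k2 [B2 [f2 e2]]] := famD f1 (VB im).
exists k2, B2; split=> // x; rewrite e2 e1; split.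
  move=> [[hA hn] hm]; split=> // [[i [lti hi]]].
  rewrite ltnS leq_eqVlt in lti; case/orP: lti => [/eqP ei|lti].
    have ei' : i = im by apply: val_inj.
    by apply: hm; rewrite -ei'.
  by apply: hn; exists i.
move=> [hA hn]; split; first split=> // [[i [lti hi]]].
  by apply: hn; exists i; split=> //; rewrite ltnS ltnW.
by move=> hm; apply: hn; exists im.
Qed.

Lemma step k (r : 'I_k -> pset X) : fam V r ->
  forall ka (a : 'I_ka -> pset X), fam V a ->
  exists k' (r' : 'I_k' -> pset X), fam V r' /\
    (forall i, unionof r' (r i)) /\ unionof r' (UU a) /\
    (forall j x, r' j x -> UU r x \/ UU a x).
Proof.
move=> [Vr Dr].
suff: forall n, (n <= k)%N -> forall ka (a : 'I_ka -> pset X), fam V a ->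
  exists k' (r' : 'I_k' -> pset X), fam V r' /\
    (forall i : 'I_k, (k - n <= i)%N -> unionof r' (r i)) /\ unionof r' (UU a) /\
    (forall j x, r' j x -> (exists i : 'I_k, (k - n <= i)%N /\ r i x) \/ UU a x).
  move=> /(_ k (leqnn k)) H ka a fa; have [k' [r' [f [h1 [h2 h3]]]]] := H ka a fa.
  exists k', r'; do !split=> //.
    by move=> i; apply: h1; rewrite subnn.
  move=> j x /h3 [[i [_ hi]]|h]; [left; by exists i | by right].
elim=> [|n IH] Hn ka a fa.
  exists ka, a; do !split=> //.
  - by move=> i; rewrite subn0 leqNgt ltn_ord.
  - by move=> x [i hi]; exists i; split=> // y hy; exists i.
  - by move=> j x hx; right; exists j.
have hc : (k - n.+1).+1 = k - n by rewrite subnS prednK // subn_gt0.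
have hic : (k - n.+1 < k)%N by rewrite hc leq_subr.
pose ic := Ordinal hic; pose C := r ic.
have [kp [p [fp ep]]] := famI fa (Vr ic).
have [kq [q [fq eq]]] := famD fa (Vr ic).
have [kw [w [fw ew]]] := diffU fa (Vr ic).
have [k0 [r0 [f0 [h1 [h2 h3]]]]] := IH (ltnW Hn) kq q fq.
have pC : forall b y, p b y -> C y /\ UU a y.
  by move=> b y hy; have [] : UU a y /\ C y by apply/ep; exists b.
have wC : forall b y, w b y -> C y /\ ~ UU a y.
  by move=> b y hy; apply/ew; exists b.
have r0C : forall b y, r0 b y -> ~ C y.
  move=> b y /h3 [[i [li hi]]|hq] hC.
    apply: (Dr i ic _ y hi hC); rewrite -val_eqE /= neq_ltn; apply/orP; right.
    by rewrite (leq_trans _ li) // -hc.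
  by have [] : UU a y /\ ~ C y by apply/eq.
have r0a : forall b y, r0 b y -> (exists i : 'I_k, (k - n <= i)%N /\ r i y) \/ UU a y.
  move=> b y /h3 [h|hq]; [by left | right].
  by have [] : UU a y /\ ~ C y by apply/eq.
exists (kp + kw + k0), (catf (catf p w) r0); split; [|split; [|split]].
- have fpw : fam V (catf p w).
    by apply: fam_cat=> // b b' y /pC [_ ?] /wC [_ ?].
  apply: fam_cat=> //.
  + move=> b b' y hb /r0C; apply.
    have : UU (catf p w) y by exists b.
    by rewrite UU_cat => -[[b1 /pC []]|[b1 /wC []]].
- move=> i li; rewrite leq_eqVlt in li; case/orP: li => [/eqP ei|li].
    have -> : i = ic by apply: val_inj.
    apply: unionof_l => x hx; case: (classic (UU a x)) => ha.
      have [b hb] : UU p x by apply/ep; split.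
      exists (lshift kw b); rewrite catf_l; by split=> // y /pC [].
    have [b hb] : UU w x by apply/ew; split.
    exists (rshift kp b); rewrite catf_r; by split=> // y /wC [].
  by apply: unionof_r; apply: h1; rewrite -hc.
- move=> x hx; case: (classic (C x)) => hC.
    have [b hb] : UU p x by apply/ep; split.
    exists (lshift k0 (lshift kw b)); rewrite !catf_l; by split=> // y /pC [].
  have hq : UU q x by apply/eq.
  have [j [sj hj]] := h2 x hq.
  exists (rshift (kp + kw) j); rewrite catf_r; split=> // y /sj hy.
  by have [] : UU a y /\ ~ C y by apply/eq.
- move=> j x hx; have : UU (catf (catf p w) r0) x by exists j.
  rewrite !UU_cat => -[[[b /pC [hC _]]|[b /wC [hC _]]]|[b /r0a [[i [li hi]]|ha]]].
  + by left; exists ic.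
  + by left; exists ic.
  + by left; exists i; split=> //; rewrite (leq_trans _ li) // -hc.
  + by right.
Qed.
End Pre.


Section R.
Context {X : Type} (V : pset X -> Prop).

Lemma refine (HP : prering V) k (A : 'I_k -> pset X) : (forall i, V (A i)) ->
  exists t (B : 'I_t -> pset X), fam V B /\ forall i, unionof B (A i).
Proof.
move=> VA.
suff: forall m, (m <= k)%N -> exists t (B : 'I_t -> pset X), fam V B /\
   forall i : 'I_k, (i < m)%N -> unionof B (A i).
  move=> /(_ k (leqnn k)) [t [B [f h]]]; exists t, B; split=> // i; exact: h.
elim=> [|m IH] Hm.
  by exists 0, (fun _ => pset0); split; [exact: fam0 | case].
have [t [B [f h]]] := IH (ltnW Hm).
pose im := Ordinal Hm.
have [k' [r' [f' [h1 [h2 _]]]]] := step HP f (fam1 (VA im)).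
exists k', r'; split=> // i; rewrite ltnS leq_eqVlt => /orP [/eqP ei|li].
  have -> : i = im by apply: val_inj.
  move=> x hx; have [j [sj hj]] : exists j, sub (r' j) (UU (fun _ : 'I_1 => A im)) /\ r' j x.
    by apply: h2; exists ord0.
  by exists j; split=> // y /sj [].
by apply: unionof_trans (h i li) h1.
Qed.

Lemma one_two : prering V -> finite_refinement V.
Proof.
move=> HP k A VA; have [t [B [[VB DB] h]]] := refine HP VA.
exists t, B; do 2!split=> //.
move=> i; exists (fun j => if excluded_middle_informative (sub (B j) (A i)) then true else false).
move=> x; split.
  move=> /(h i) [j [sj hj]]; exists j; split=> //.
  by case: excluded_middle_informative.
move=> [j []]; case: excluded_middle_informative => // s _; exact: s.
Qed.

Lemma four_one : V pset0 -> SV_ring V -> prering V.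
Proof.
move=> V0 [_ HR]; split=> // A1 A2 V1 V2.
have S1 := inSV_V V1; have S2 := inSV_V V2.
have [_ D12] := HR _ _ S1 S2.
have [_ D] := HR _ _ S1 D12.
split=> //; apply: inSV_ext D => x; rewrite /psetD /psetI; split.
  by move=> [h1 h2]; split=> //; apply: NNPP => h; apply: h2.
by move=> [h1 h2]; split=> // -[].
Qed.

End R.

Import GRing.Theory.
Local Open Scope ring_scope.

Section S3.
Context {X : Type} (V : pset X -> Prop).

Lemma sum_charf_in {R : pzRingType} {Y : lmodType R} k (A : 'I_k -> pset X)
  (y : 'I_k -> Y) x l : pw_disjoint A -> A l x ->
  \sum_(i < k) charf (A i) (y i) x = y l.
Proof.
move=> D hl; rewrite (bigD1 l) //= big1 ?addr0.
  by rewrite /charf; case: excluded_middle_informative.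
move=> i ne; rewrite /charf; case: excluded_middle_informative => // h.
by case: (D i l ne x h hl).
Qed.

Lemma sum_charf_out {R : pzRingType} {Y : lmodType R} k (A : 'I_k -> pset X)
  (y : 'I_k -> Y) x : (forall i, ~ A i x) ->
  \sum_(i < k) charf (A i) (y i) x = 0.
Proof.
move=> h; rewrite big1 // => i _; rewrite /charf.
by case: excluded_middle_informative => // hi; case: (h i hi).
Qed.

Lemma fin_refine (HR : finite_refinement V) (T : finType) (A : T -> pset X) :
  (forall p, V (A p)) ->
  exists t (B : 'I_t -> pset X), fam V B /\ forall p, unionof B (A p).
Proof.
move=> VA; have [t [B [VB [DB HJ]]]] := HR #|T| (fun i : 'I_#|T| => A (enum_val i)) (fun i => VA (enum_val i)).
exists t, B; split=> // p x hx.
have [J hJ] := HJ (enum_rank p); rewrite enum_rankK in hJ.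
have [j [Jj hj]] := (proj1 (hJ x)) hx.
by exists j; split=> // y hy; apply/hJ; exists j.
Qed.

Lemma two_three (K : fieldType) : finite_refinement V -> superposition_closed K V.
Proof.
move=> HR n Y W u u0 s Hs.
have Hs' : forall j, {k : nat & {y : 'I_k -> Y j & {A : 'I_k -> pset X |
   (forall i, V (A i)) /\ pw_disjoint A /\
   forall x, s j x = \sum_(i < k) charf (A i) (y i) x}}}.
  move=> j; have [k Hk] := constructive_indefinite_description _ (Hs j).
  exists k; have [y Hy] := constructive_indefinite_description _ Hk.
  exists y; have [A HA] := constructive_indefinite_description _ Hy.
  by exists A.
pose k j := projT1 (Hs' j).
pose y j : 'I_(k j) -> Y j := projT1 (projT2 (Hs' j)).
pose A j : 'I_(k j) -> pset X := proj1_sig (projT2 (projT2 (Hs' j))).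
have VA : forall j i, V (A j i) := fun j => proj1 (proj2_sig (projT2 (projT2 (Hs' j)))).
have sA : forall j x, s j x = \sum_(i < k j) charf (A j i) (y j i) x :=
  fun j => proj2 (proj2 (proj2_sig (projT2 (projT2 (Hs' j))))).
pose AA (p : {j : 'I_n & 'I_(k j)}) := A (tag p) (tagged p).
have [t [B [[VB DB] hU]]] := fin_refine HR (fun p => VA (tag p) (tagged p) : V (AA p)).
have hU' : forall j i x, A j i x -> exists l, sub (B l) (A j i) /\ B l x.
  by move=> j i x h; exact: (hU (Tagged (fun j => 'I_(k j)) i) x h).
pose w l := u (fun j => \sum_(i < k j)
  (if excluded_middle_informative (sub (B l) (A j i)) then y j i else 0)).
exists t, w, B; do 2!split=> //.
move=> x; case: (classic (exists l, B l x)) => [[l hl]|hn].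
  rewrite (sum_charf_in _ DB hl) /w; congr u.
  apply: functional_extensionality_dep => j; rewrite sA; apply: eq_bigr => i _.
  rewrite /charf; case: excluded_middle_informative => h1;
    case: excluded_middle_informative => h2 //.
    have [l' [s' hl']] := hU' _ _ _ h1.
    case: (eqVneq l' l) => [el|ne]; first by case: h2; rewrite -el.
    by case: (DB _ _ ne x hl' hl).
  by case: h1; apply: h2.
rewrite sum_charf_out; last by move=> l hl; apply: hn; exists l.
rewrite -u0; congr u; apply: functional_extensionality_dep => j.
rewrite sA sum_charf_out // => i /hU' [l [_ hl]]; by apply: hn; exists l.
Qed.


End S3.


Section S4.
Context {X : Type} (V : pset X -> Prop) (K : fieldType).

Definition ind (P : pset X) (x : X) : K^o :=
  if excluded_middle_informative (P x) then 1 else 0.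

Lemma ind_SV P : inSV V P -> inSVY V (ind P).
Proof.
move=> [k [a [Va [Da ea]]]]; exists k, (fun _ => 1), a; do 2!split=> //.
move=> x; rewrite /ind; case: excluded_middle_informative => h.
  by have [i hi] := proj1 (ea x) h; rewrite (sum_charf_in _ Da hi).
by rewrite sum_charf_out // => i hi; apply: h; apply/ea; exists i.
Qed.

Lemma SV_ind (V0 : V pset0) P (f : X -> K^o) : inSVY V f -> (forall x, f x = ind P x) ->
  inSV V P.
Proof.
move=> [k [y [A [VA [DA eA]]]]] ef.
exists k, (fun i => if y i != 0 then A i else pset0); split; [|split].
- by move=> i; case: (y i != 0).
- move=> i j ne x hi hj; apply: (DA i j ne x); [move: hi | move: hj]; by case: (_ != 0).
- move=> x; have := ef x; rewrite eA /ind; case: excluded_middle_informative => hP.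
  + case: (classic (exists i, A i x)) => [[i hi]|hn].
      rewrite (sum_charf_in _ DA hi) => e; split=> // _; exists i.
      by rewrite e oner_neq0.
    rewrite sum_charf_out => [e|i hi]; last by apply: hn; exists i.
    by move/eqP: e; rewrite eq_sym oner_eq0.
  + case: (classic (exists i, A i x)) => [[i hi]|hn].
      rewrite (sum_charf_in _ DA hi) => e; split=> // -[j].
      case: (eqVneq j i) => [->|ne]; first by rewrite e eqxx.
      by case: (y j != 0) => // hj; case: (DA _ _ ne x hj hi).
    move=> _; split=> // -[j]; case: (y j != 0) => hj; [case: hn; by exists j | case: hj].
Qed.

Lemma three_four (V0 : V pset0) : superposition_closed K V -> SV_ring V.
Proof.
move=> HS; split.
  by exists 0, (fun _ => pset0); have [? ?] := fam0 V; do 2!split=> //; move=> x; split=> [[]|[[]]].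
move=> A B hA hB.
pose s (j : 'I_(2%N)) : X -> K^o := if j == ord0 then ind A else ind B.
have Hs : forall j, inSVY V (s j).
  by move=> j; rewrite /s; case: (j == ord0); apply: ind_SV.
have s0 : forall x, s ord0 x = ind A x by [].
have s1 : forall x, s ord_max x = ind B x by [].
pose uU (v : 'I_(2%N) -> K^o) : K^o := if (v ord0 != 0) || (v ord_max != 0) then 1 else 0.
pose uD (v : 'I_(2%N) -> K^o) : K^o := if (v ord0 != 0) && (v ord_max == 0) then 1 else 0.
have u0U : uU (fun _ => 0) = 0 by rewrite /uU eqxx.
have u0D : uD (fun _ => 0) = 0 by rewrite /uD eqxx.
have hU := HS 2%N (fun _ => K^o) K^o uU u0U s Hs.
have hD := HS 2%N (fun _ => K^o) K^o uD u0D s Hs.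
have iT : forall P x, P x -> ind P x = 1.
  by move=> P x h; rewrite /ind; case: excluded_middle_informative.
have iF : forall P x, ~ P x -> ind P x = 0.
  by move=> P x h; rewrite /ind; case: excluded_middle_informative.
have o1 : ((1 : K^o) != 0) = true by rewrite oner_eq0.
split.
  apply: (SV_ind V0 (P := psetU A B) hU) => x; rewrite /uU s0 s1.
  case: (classic (A x)) => ha; case: (classic (B x)) => hb.
  - by rewrite (iT _ _ ha) (iT _ _ hb) (iT (psetU A B)) ?o1 //; left.
  - by rewrite (iT _ _ ha) (iF _ _ hb) (iT (psetU A B)) ?o1 //; left.
  - by rewrite (iF _ _ ha) (iT _ _ hb) (iT (psetU A B)) ?o1 ?eqxx //; right.
  - by rewrite (iF _ _ ha) (iF _ _ hb) (iF (psetU A B)) ?eqxx // => -[].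
apply: (SV_ind V0 (P := psetD A B) hD) => x; rewrite /uD s0 s1.
case: (classic (A x)) => ha; case: (classic (B x)) => hb.
- by rewrite (iT _ _ ha) (iT _ _ hb) (iF (psetD A B)) ?o1 ?oner_eq0 // => -[].
- by rewrite (iT _ _ ha) (iF _ _ hb) (iT (psetD A B)) ?o1 ?eqxx.
- by rewrite (iF _ _ ha) (iT _ _ hb) (iF (psetD A B)) ?eqxx // => -[].
- by rewrite (iF _ _ ha) (iF _ _ hb) (iF (psetD A B)) ?eqxx // => -[].
Qed.
End S4.

Theorem mainTheorem2 (K : fieldType) (X : Type) (V : pset X -> Prop) :
  V pset0 ->
  [<-> prering V; finite_refinement V; superposition_closed K V; SV_ring V].
Proof.
move=> V0; tfae.
- exact: one_two.
- exact: two_three.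
- exact: three_four.
- exact: four_one.
Qed.
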